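(* Let $0<\lambda<1$ and $c>0$. Let $g:[0,\infty)\to[1,\infty)$, $g(x) = [1 + (1-\lambda)x]^{1/(1-\lambda)}$, and let $h(x) = \frac{W(g(x))}{\exp[c\, g(x)^{1-\lambda}]} - 1$ for $x \ge 0$. Then for every $s\in\mathbb{C}$ with $\Re(s)>0$, the Laplace transform $\mathscr{L}(s) = \int_0^\infty h(x) e^{-sx}\,dx$ equals $$\mathscr{L}(s) = \frac{c(1-\lambda)}{c(1-\lambda)+s}\,\Psi(s) - \frac1s.$$
   Context: For $x>0$ define $w(x) = \frac{c(1-\lambda)\log(x)\exp(c x^{1-\lambda})}{x^\lambda}$ and $W(x) = \sum_{p \le x} w(p)$ (sum over primes). For $\Re(s)>0$ define $\Psi(s) = \sum_p \frac{\log p}{p^\lambda \exp\left[s\,\frac{p^{1-\lambda}-1}{1-\lambda}\right]}$, the sum over all primes $p$. *)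

(* Defs.v *)
From Stdlib Require Import Reals ZArith Znumtheory.
From Coquelicot Require Import Coquelicot.
Open Scope R_scope.

Definition Cexp (z : C) : C :=
  (exp (Re z) * cos (Im z), exp (Re z) * sin (Im z)).

Definition isprime (n : nat) : bool :=
  if prime_dec (Z.of_nat n) then true else false.

Definition w (lam c x : R) : R :=
  c * (1 - lam) * ln x * exp (c * Rpower x (1 - lam)) / Rpower x lam.

Definition W (lam c x : R) : R :=
  sum_f_R0 (fun n => if isprime n then w lam c (INR n) else 0)
           (Z.to_nat (Int_part x)).

Definition g (lam x : R) : R := Rpower (1 + (1 - lam) * x) (1 / (1 - lam)).

Definition h (lam c x : R) : R :=
  W lam c (g lam x) / exp (c * Rpower (g lam x) (1 - lam)) - 1.

Definition Psi_term (lam : R) (s : C) (n : nat) : C :=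
  if isprime n then
    RtoC (ln (INR n) / Rpower (INR n) lam)
    * Cinv (Cexp (s * RtoC ((Rpower (INR n) (1 - lam) - 1) / (1 - lam))))
  else RtoC 0.

Definition laplace_integrand (lam c : R) (s : C) (x : R) : C :=
  RtoC (h lam c x) * Cexp (Copp s * RtoC x).

(* Main.v *)
Require Import Defs.
From Stdlib Require Import Reals.
From Coquelicot Require Import Coquelicot.
From Stdlib Require Import Lra Lia Psatz ZArith Znumtheory.
Open Scope R_scope.


Lemma Cexp_plus (a b : C) : Cexp (a + b)%C = (Cexp a * Cexp b)%C.
Proof.
  destruct a as [a1 a2], b as [b1 b2]; unfold Cexp, Cplus, Cmult; simpl.
  rewrite exp_plus, cos_plus, sin_plus. f_equal; ring.
Qed.

Lemma Cexp_RtoC (r : R) : Cexp (RtoC r) = RtoC (exp r).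
Proof. unfold Cexp, RtoC; simpl. rewrite cos_0, sin_0. f_equal; ring. Qed.

Lemma Cmod_Cexp (w : C) : Cmod (Cexp w) = exp (Re w).
Proof.
  destruct w as [a b]; unfold Cexp, Cmod; simpl.
  match goal with |- sqrt ?X = _ => replace X with (exp a ^ 2) end.
  - apply sqrt_pow2. left; apply exp_pos.
  - assert (Hs := sin2_cos2 b). unfold Rsqr in Hs.
    transitivity (exp a ^ 2 * (sin b * sin b + cos b * cos b)); [rewrite Hs; ring | ring].
Qed.

Lemma Cexp_neq0 (w : C) : Cexp w <> 0%C.
Proof.
  intro H. assert (H1 := Cmod_Cexp w). rewrite H, Cmod_0 in H1.
  generalize (exp_pos (Re w)); lra.
Qed.

Lemma Cinv_Cexp (w : C) : Cinv (Cexp w) = Cexp (Copp w).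
Proof.
  assert (H : (Cexp w * Cexp (Copp w))%C = 1%C).
  { rewrite <- Cexp_plus. replace (w + - w)%C with (RtoC 0).
    rewrite Cexp_RtoC, exp_0; reflexivity.
    destruct w; unfold Cplus, Copp, RtoC; simpl; f_equal; ring. }
  rewrite <- (Cmult_1_l (/ Cexp w)), <- H.
  rewrite (Cmult_comm (Cexp w)), <- Cmult_assoc, Cinv_r. apply Cmult_1_r.
  apply Cexp_neq0.
Qed.

Lemma is_RInt_Cexp (D B : C) (p q : R) :
  is_RInt (V := C_R_NormedModule)
    (fun x => (D * B * Cexp (B * RtoC x))%C) p q
    (Cminus (D * Cexp (B * RtoC q)) (D * Cexp (B * RtoC p))%C).
Proof.
  destruct D as [d1 d2], B as [b1 b2].
  set (F1 := fun x => d1 * (exp (b1 * x) * cos (b2 * x)) - d2 * (exp (b1 * x) * sin (b2 * x))).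
  set (F2 := fun x => d1 * (exp (b1 * x) * sin (b2 * x)) + d2 * (exp (b1 * x) * cos (b2 * x))).
  set (G1 := fun x => (d1*b1 - d2*b2) * (exp (b1 * x) * cos (b2 * x)) - (d1*b2 + d2*b1) * (exp (b1 * x) * sin (b2 * x))).
  set (G2 := fun x => (d1*b1 - d2*b2) * (exp (b1 * x) * sin (b2 * x)) + (d1*b2 + d2*b1) * (exp (b1 * x) * cos (b2 * x))).
  assert (E : forall x, ((d1, d2) * (b1, b2) * Cexp ((b1, b2) * RtoC x))%C = (G1 x, G2 x)).
  { intro x. unfold G1, G2, Cexp, Cmult, RtoC; simpl.
    replace (b1 * x - b2 * 0) with (b1 * x) by ring.
    replace (b1 * 0 + b2 * x) with (b2 * x) by ring. f_equal; ring. }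
  assert (EF : forall x, ((d1, d2) * Cexp ((b1, b2) * RtoC x))%C = (F1 x, F2 x)).
  { intro x. unfold F1, F2, Cexp, Cmult, RtoC; simpl.
    replace (b1 * x - b2 * 0) with (b1 * x) by ring.
    replace (b1 * 0 + b2 * x) with (b2 * x) by ring. f_equal; ring. }
  eapply is_RInt_ext. { intros x _. symmetry. apply E. }
  rewrite !EF. unfold Cminus, Cplus, Copp. simpl.
  apply (is_RInt_fct_extend_pair (U:=R_NormedModule) (V:=R_NormedModule)); simpl.
  - replace (F1 q + - F1 p) with (minus (F1 q) (F1 p)) by reflexivity.
    apply (is_RInt_derive (V:=R_CompleteNormedModule)).
    + intros x _. unfold F1, G1. auto_derive; auto. ring.
    + intros x _. unfold G1. apply (ex_derive_continuous (K:=R_AbsRing) (V:=R_NormedModule)). auto_derive; auto.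
  - replace (F2 q + - F2 p) with (minus (F2 q) (F2 p)) by reflexivity.
    apply (is_RInt_derive (V:=R_CompleteNormedModule)).
    + intros x _. unfold F2, G2. auto_derive; auto. ring.
    + intros x _. unfold G2. apply (ex_derive_continuous (K:=R_AbsRing) (V:=R_NormedModule)). auto_derive; auto.
Qed.


Lemma floor_le (y : R) (n : nat) : 0 <= y ->
  ((n <= Z.to_nat (Int_part y))%nat <-> INR n <= y).
Proof.
  intro Hy. destruct (base_Int_part y) as [H1 H2].
  assert (HI : (0 <= Int_part y)%Z).
  { assert (-1 < Int_part y)%Z. { apply lt_IZR. simpl. lra. } lia. }
  assert (HE : INR (Z.to_nat (Int_part y)) = IZR (Int_part y)).
  { rewrite INR_IZR_INZ, Z2Nat.id; auto. }
  split.
  - intro Hn. apply le_INR in Hn. lra.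
  - intro Hn. destruct (le_lt_dec n (Z.to_nat (Int_part y))) as [h|h]; auto.
    exfalso. assert (Z.of_nat n >= Int_part y + 1)%Z by lia.
    assert (IZR (Z.of_nat n) >= IZR (Int_part y + 1)).
    { apply Rle_ge, IZR_le. lia. }
    rewrite plus_IZR in H0. rewrite <- INR_IZR_INZ in H0. lra.
Qed.

Lemma sum_trunc (F : nat -> R) (M N : nat) : (M <= N)%nat ->
  sum_f_R0 F M = sum_f_R0 (fun n => if le_dec n M then F n else 0) N.
Proof.
  induction N; intro HMN.
  - assert (M = 0%nat) by lia. subst. simpl. destruct (le_dec 0 0); [reflexivity | lia].
  - destruct (Nat.eq_dec M (S N)) as [e|ne].
    + subst. apply sum_eq. intros i Hi. destruct (le_dec i (S N)); [reflexivity | lia].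
    + rewrite IHN by lia. simpl. destruct (le_dec (S N) M); [lia | ring].
Qed.

Lemma Rpower_lt_l (a b e : R) : 0 < a -> a < b -> 0 < e -> Rpower a e < Rpower b e.
Proof.
  intros. unfold Rpower. apply exp_increasing. apply Rmult_lt_compat_l; auto.
  apply ln_increasing; auto.
Qed.

Lemma Rpower_ge1 (a e : R) : 1 <= a -> 0 <= e -> 1 <= Rpower a e.
Proof.
  intros. rewrite <- (Rpower_O a) by lra. apply Rle_Rpower; auto.
Qed.

Definition xn (lam : R) (n : nat) : R := (Rpower (INR n) (1 - lam) - 1) / (1 - lam).

Section G.
Variables lam : R.
Hypothesis hl0 : 0 < lam.
Hypothesis hl1 : lam < 1.

Lemma g_pos x : 0 < g lam x.
Proof. unfold g, Rpower. apply exp_pos. Qed.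

Lemma g_pow x : 0 <= x -> Rpower (g lam x) (1 - lam) = 1 + (1 - lam) * x.
Proof.
  intro. unfold g. rewrite Rpower_mult.
  replace (1 / (1 - lam) * (1 - lam)) with 1 by (field; lra).
  apply Rpower_1. nra.
Qed.

Lemma xn_ge0 n : (1 <= n)%nat -> 0 <= xn lam n.
Proof.
  intro. unfold xn. apply Rmult_le_pos.
  - assert (1 <= Rpower (INR n) (1 - lam)). apply Rpower_ge1.
    apply (le_INR 1); auto. lra. lra.
  - left; apply Rinv_0_lt_compat; lra.
Qed.

Lemma g_le n x : (1 <= n)%nat -> 0 <= x -> (INR n <= g lam x <-> xn lam n <= x).
Proof.
  intros Hn Hx. assert (Hn' : 1 <= INR n) by (apply (le_INR 1); auto).
  assert (Hg := g_pos x). assert (Hp := g_pow x Hx).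
  unfold xn. split.
  - intro H. assert (Rpower (INR n) (1 - lam) <= 1 + (1 - lam) * x).
    { rewrite <- Hp. apply Rle_Rpower_l; lra. }
    apply (Rmult_le_reg_r (1 - lam)); [lra|]. unfold Rdiv.
    rewrite Rmult_assoc, Rinv_l by lra. lra.
  - intro H. destruct (Rle_lt_dec (INR n) (g lam x)) as [h|h]; auto.
    exfalso. assert (Rpower (g lam x) (1 - lam) < Rpower (INR n) (1 - lam)).
    { apply Rpower_lt_l; lra. }
    rewrite Hp in H0.
    apply (Rmult_le_compat_r (1 - lam)) in H; [|lra]. unfold Rdiv in H.
    rewrite Rmult_assoc, Rinv_l in H by lra. lra.
Qed.
End G.


Lemma nonneg_bounded_ex_series (a : nat -> R) (M : R) :
  (forall n, 0 <= a n) -> (forall N, sum_f_R0 a N <= M) -> ex_series a.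
Proof.
  intros Hp Hb.
  destruct (ex_finite_lim_seq_incr (sum_n a) M) as [l Hl].
  - intro n. rewrite sum_Sn. simpl. unfold plus; simpl. generalize (Hp (S n)); lra.
  - intro n. rewrite sum_n_Reals. apply Hb.
  - exists l. exact Hl.
Qed.

Lemma series_partial_le (a : nat -> R) (N : nat) :
  (forall n, 0 <= a n) -> ex_series a -> sum_f_R0 a N <= Series a.
Proof.
  intros Hp [l Hl]. rewrite (is_series_unique a l Hl). rewrite <- sum_n_Reals.
  apply (is_lim_seq_incr_compare (sum_n a) l Hl).
  intro n. rewrite sum_Sn. simpl. unfold plus; simpl. generalize (Hp (S n)); lra.
Qed.

Lemma ex_series_inv_sq : ex_series (fun n => / (INR n + 1) ^ 2).
Proof.
  apply (nonneg_bounded_ex_series _ 2).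
  - intro n. left. apply Rinv_0_lt_compat. apply pow_lt. generalize (pos_INR n); lra.
  - assert (H : forall N, sum_f_R0 (fun n => / (INR n + 1) ^ 2) N <= 2 - / (INR N + 1)).
    { induction N.
      - simpl. lra.
      - rewrite tech5, S_INR. set (t := INR N). assert (0 <= t) by apply pos_INR.
        fold t in IHN.
        set (u := / (t + 1)). set (v := / (t + 1 + 1)).
        assert (Hu : u * (t + 1) = 1) by (unfold u; field; lra).
        assert (Hv : v * (t + 1 + 1) = 1) by (unfold v; field; lra).
        assert (0 < u) by (unfold u; apply Rinv_0_lt_compat; lra).
        assert (0 < v) by (unfold v; apply Rinv_0_lt_compat; lra).
        assert (E : / (t + 1 + 1) ^ 2 = v * v) by (unfold v; field; lra).
        assert (Euv : u - v = u * v) by (unfold u, v; field; lra).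
        assert (v <= u) by (unfold u, v; apply Rinv_le_contravar; lra).
        assert (v * v <= u * v) by (apply Rmult_le_compat_r; lra).
        fold u in IHN. rewrite E. lra. }
    intro N. generalize (H N). assert (0 < / (INR N + 1)).
    { apply Rinv_0_lt_compat. generalize (pos_INR N); lra. } lra.
Qed.

Lemma exp_pow_nat (x : R) (k : nat) : exp x ^ k = exp (INR k * x).
Proof.
  induction k.
  - simpl. rewrite Rmult_0_l, exp_0. reflexivity.
  - rewrite S_INR. simpl. rewrite IHk, <- exp_plus. f_equal. ring.
Qed.

Lemma lt_exp (t : R) : t < exp t.
Proof.
  destruct (Req_dec t 0) as [e|ne].
  - subst. rewrite exp_0. lra.
  - generalize (exp_ineq1 t ne). lra.
Qed.

Lemma isprime_ge2 n : isprime n = true -> (2 <= n)%nat.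
Proof.
  unfold isprime. destruct (prime_dec (Z.of_nat n)) as [p|p]; [|discriminate].
  intros _. apply prime_ge_2 in p. lia.
Qed.

Definition qseq (lam tau : R) (n : nat) : R :=
  if isprime n then ln (INR n) / Rpower (INR n) lam * exp (- tau * xn lam n) else 0.

Lemma qseq_nonneg lam tau n : 0 < lam -> 0 <= qseq lam tau n.
Proof.
  intro. unfold qseq. destruct (isprime n) eqn:E; [|lra].
  apply isprime_ge2 in E. assert (H1 : 1 <= INR n) by (apply (le_INR 1); lia).
  apply Rmult_le_pos; [|left; apply exp_pos].
  apply Rmult_le_pos. rewrite <- ln_1. apply ln_le; lra.
  left. apply Rinv_0_lt_compat. unfold Rpower. apply exp_pos.
Qed.

Lemma series_core (lam tau : R) : 0 < lam -> lam < 1 -> 0 < tau ->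
  ex_series (qseq lam tau).
Proof.
  intros hl0 hl1 ht.
  set (bt := 1 - lam). assert (hb : 0 < bt) by (unfold bt; lra).
  set (al := tau / bt). assert (ha : 0 < al) by (unfold al; apply Rdiv_lt_0_compat; lra).
  destruct (archimed (3 / bt)) as [Hup _].
  set (k := S (Z.to_nat (up (3 / bt)))).
  assert (Hk : 3 <= INR k * bt).
  { assert (3 / bt < INR k).
    { unfold k. rewrite S_INR. destruct (Z_le_gt_dec 0 (up (3/bt))) as [h|h].
      - rewrite INR_IZR_INZ, Z2Nat.id by lia. lra.
      - assert (IZR (up (3/bt)) <= 0) by (apply IZR_le; lia).
        assert (0 < 3 / bt) by (apply Rdiv_lt_0_compat; lra).
        lra. }
    apply (Rmult_lt_compat_r bt) in H; auto. unfold Rdiv in H.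
    rewrite Rmult_assoc, Rinv_l in H by lra. lra. }
  assert (Hk0 : 0 < INR k) by (unfold k; rewrite S_INR; generalize (pos_INR (Z.to_nat (up (3/bt)))); lra).
  set (D := (al / INR k) ^ k).
  assert (HD : 0 < D) by (unfold D; apply pow_lt; apply Rdiv_lt_0_compat; lra).
  assert (Hdec : forall n, (1 <= n)%nat ->
            D * INR n ^ 3 <= exp (al * Rpower (INR n) bt)).
  { intros n Hn. assert (H1 : 1 <= INR n) by (apply (le_INR 1); lia).
    set (P := Rpower (INR n) bt).
    assert (HP : 0 < P) by (unfold P, Rpower; apply exp_pos).
    replace (exp (al * P)) with (exp (al * P / INR k) ^ k)
      by (rewrite exp_pow_nat; f_equal; field; lra).
    apply Rle_trans with ((al * P / INR k) ^ k).
    2: { apply pow_incr. split. left; apply Rdiv_lt_0_compat; nra.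
         left; apply lt_exp. }
    replace (al * P / INR k) with ((al / INR k) * P) by (field; lra).
    rewrite Rpow_mult_distr. unfold D. apply Rmult_le_compat_l.
    { left; apply pow_lt, Rdiv_lt_0_compat; lra. }
    rewrite <- (Rpower_pow k P) by auto. unfold P. rewrite Rpower_mult.
    replace (INR n ^ 3) with (Rpower (INR n) (INR 3)) by (apply Rpower_pow; lra).
    apply Rle_Rpower; auto. replace (INR 3) with 3 by (simpl; ring). rewrite Rmult_comm. lra. }
  set (K := 4 * exp al / D).
  apply (ex_series_le (V:=R_CompleteNormedModule) _ (fun n => scal K (/ (INR n + 1) ^ 2))).
  2: { apply (ex_series_scal_l (V:=R_NormedModule)). apply ex_series_inv_sq. }
  intro n. change (norm (qseq lam tau n)) with (Rabs (qseq lam tau n)).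
  rewrite Rabs_pos_eq by (apply qseq_nonneg; auto).
  change (scal K (/ (INR n + 1) ^ 2)) with (K * / (INR n + 1) ^ 2).
  assert (HK : 0 < K) by (unfold K; apply Rdiv_lt_0_compat; [generalize (exp_pos al); lra | lra]).
  unfold qseq. destruct (isprime n) eqn:E.
  2: { apply Rmult_le_pos; [lra|]. left. apply Rinv_0_lt_compat, pow_lt. generalize (pos_INR n); lra. }
  apply isprime_ge2 in E.
  assert (H1 : 1 <= INR n) by (apply (le_INR 1); lia).
  set (P := Rpower (INR n) bt).
  assert (Hexp : exp (- tau * xn lam n) = exp al / exp (al * P)).
  { unfold Rdiv. rewrite <- exp_Ropp, <- exp_plus. f_equal. unfold xn, P, al. fold bt. field. lra. }
  assert (Hln : 0 <= ln (INR n) <= INR n).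
  { split. rewrite <- ln_1. apply ln_le; lra.
    left. rewrite <- (ln_exp (INR n)) at 2. apply ln_increasing. lra. apply lt_exp. }
  assert (Hl : 1 <= Rpower (INR n) lam) by (apply Rpower_ge1; lra).
  assert (Hd := Hdec n ltac:(lia)). fold P in Hd.
  assert (HeP : 0 < exp (al * P)) by apply exp_pos.
  assert (Hea : 0 < exp al) by apply exp_pos.
  rewrite Hexp.
  apply Rle_trans with (INR n * (exp al / (D * INR n ^ 3))).
  - apply Rmult_le_compat.
    + apply Rmult_le_pos; [lra|]. left; apply Rinv_0_lt_compat; lra.
    + left; apply Rdiv_lt_0_compat; lra.
    + unfold Rdiv. apply Rle_trans with (ln (INR n) * 1).
      apply Rmult_le_compat_l; [lra|]. rewrite <- Rinv_1. apply Rinv_le_contravar; lra.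
      lra.
    + unfold Rdiv. apply Rmult_le_compat_l; [lra|]. apply Rinv_le_contravar; auto.
      apply Rmult_lt_0_compat; auto. apply pow_lt; lra.
  - unfold K. set (t := INR n). fold t in H1.
    assert (Ht : (t + 1) ^ 2 <= 4 * t ^ 2) by nra.
    replace (t * (exp al / (D * t ^ 3))) with (exp al / D * / t ^ 2) by (field; lra).
    replace (4 * exp al / D * / (t + 1) ^ 2) with (exp al / D * (4 / (t + 1) ^ 2)) by (field; lra).
    apply Rmult_le_compat_l. left; apply Rdiv_lt_0_compat; lra.
    replace (4 / (t+1)^2) with (/ ((t+1)^2 / 4)) by (field; lra).
    apply Rinv_le_contravar. apply Rdiv_lt_0_compat; [apply pow_lt; lra | lra]. lra.
Qed.


Fixpoint csum (f : nat -> C) (N : nat) : C :=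
  match N with O => f O | S k => (csum f k + f (S k))%C end.

Lemma csum_sum_n f N : csum f N = sum_n (G:=C_AbelianGroup) f N.
Proof.
  induction N. simpl. rewrite sum_O. reflexivity.
  simpl. rewrite sum_Sn, IHN. reflexivity.
Qed.

Lemma csum_sum_n_R f N : csum f N =
  sum_n (G:=NormedModule.AbelianMonoid R_AbsRing
               (CompleteNormedModule.NormedModule R_AbsRing C_R_CompleteNormedModule)) f N.
Proof.
  induction N. simpl. rewrite sum_O. reflexivity.
  simpl. rewrite sum_Sn, IHN. reflexivity.
Qed.

Lemma RtoC_sum (r : nat -> R) (K : C) N :
  (RtoC (sum_f_R0 r N) * K)%C = csum (fun n => (RtoC (r n) * K)%C) N.
Proof.
  induction N. reflexivity.
  simpl. rewrite RtoC_plus, <- IHN. ring.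
Qed.

Lemma g_mono lam x y : 0 < lam -> lam < 1 -> 0 <= x <= y -> g lam x <= g lam y.
Proof.
  intros. unfold g. apply Rle_Rpower_l. left; apply Rdiv_lt_0_compat; lra. nra.
Qed.

Section Main.
Variables (lam c : R) (s : C).
Hypothesis hl0 : 0 < lam.
Hypothesis hl1 : lam < 1.
Hypothesis hc : 0 < c.
Hypothesis hs : 0 < Re s.

Definition zz : C := (RtoC (c * (1 - lam)) + s)%C.
Definition BB : C := Copp zz.
Definition Nb (b : R) : nat := Z.to_nat (Int_part (g lam b)).
Definition rr (n : nat) (x : R) : R :=
  if isprime n then if Rle_dec (xn lam n) x then w lam c (INR n) else 0 else 0.
Definition QQ (x : R) : C := (RtoC (exp (- c)) * Cexp (BB * RtoC x))%C.

Lemma BB_split x : Cexp (BB * RtoC x) = (RtoC (exp (- (c * (1 - lam) * x))) * Cexp (Copp s * RtoC x))%C.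
Proof.
  rewrite <- Cexp_RtoC, <- Cexp_plus. f_equal. unfold BB, zz.
  destruct s as [s1 s2]. unfold Copp, Cplus, Cmult, RtoC; simpl. f_equal; ring.
Qed.

Lemma BB_neq0 : BB <> 0%C.
Proof.
  intro H. assert (H' : Re BB = 0) by (rewrite H; reflexivity).
  unfold BB, zz in H'. destruct s as [s1 s2]. simpl in *. nra.
Qed.

Lemma s_neq0 : s <> 0%C.
Proof. intro H. rewrite H in hs. simpl in hs. lra. Qed.

Lemma W_decomp x b : 0 <= x <= b ->
  W lam c (g lam x) = sum_f_R0 (fun n => rr n x) (Nb b).
Proof.
  intros Hx. unfold W. set (M := Z.to_nat (Int_part (g lam x))).
  assert (Hgx := g_pos lam x). assert (Hgb := g_pos lam b).
  assert (HM : (M <= Nb b)%nat).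
  { unfold Nb. apply floor_le; [lra|].
    apply Rle_trans with (g lam x). apply floor_le; [lra | lia].
    apply g_mono; lra. }
  rewrite (sum_trunc _ M (Nb b) HM). apply sum_eq. intros n _.
  unfold rr. destruct (isprime n) eqn:E.
  - apply isprime_ge2 in E.
    assert (Hiff := floor_le (g lam x) n ltac:(lra)). fold M in Hiff.
    assert (Hiff2 := g_le lam hl0 hl1 n x ltac:(lia) ltac:(lra)).
    destruct (le_dec n M); destruct (Rle_dec (xn lam n) x); try reflexivity; exfalso; tauto.
  - destruct (le_dec n M); reflexivity.
Qed.

Lemma integrand_decomp x b : 0 <= x <= b ->
  laplace_integrand lam c s x =
  Cminus (csum (fun n => (RtoC (rr n x) * QQ x)%C) (Nb b)) (Cexp (Copp s * RtoC x)).
Proof.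
  intros Hx. rewrite <- RtoC_sum, <- W_decomp with (x := x) by auto.
  unfold laplace_integrand, h, QQ. rewrite g_pow by lra. rewrite BB_split.
  set (X := Cexp (Copp s * RtoC x)). set (Wv := W lam c (g lam x)).
  assert (E : / exp (c * (1 + (1 - lam) * x)) = exp (- c) * exp (- (c * (1 - lam) * x))).
  { rewrite <- exp_Ropp, <- exp_plus. f_equal. ring. }
  unfold Rdiv. rewrite E. rewrite RtoC_minus, !RtoC_mult. ring.
Qed.

Definition Dn (n : nat) : C := (RtoC (w lam c (INR n)) * RtoC (exp (- c)) / BB)%C.
Definition In (n : nat) (b : R) : C :=
  if isprime n then Cminus (Dn n * Cexp (BB * RtoC b)) (Dn n * Cexp (BB * RtoC (xn lam n)))%C
  else RtoC 0.

Lemma term_int n b : 0 <= b -> (n <= Nb b)%nat ->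
  is_RInt (V := C_R_NormedModule) (fun x => (RtoC (rr n x) * QQ x)%C) 0 b (In n b).
Proof.
  intros Hb Hn. unfold In.
  destruct (isprime n) eqn:E.
  - assert (E2 := isprime_ge2 _ E).
    assert (Hx0 : 0 <= xn lam n) by (apply xn_ge0; auto; lia).
    assert (Hxb : xn lam n <= b).
    { apply (g_le lam hl0 hl1 n b ltac:(lia) Hb). apply floor_le.
      left; apply g_pos. exact Hn. }
    replace (Cminus (Dn n * Cexp (BB * RtoC b)) (Dn n * Cexp (BB * RtoC (xn lam n))))%C
      with (plus (zero : C_R_NormedModule)
              (Cminus (Dn n * Cexp (BB * RtoC b)) (Dn n * Cexp (BB * RtoC (xn lam n))))%C)
      by apply plus_zero_l.
    apply is_RInt_Chasles with (b := xn lam n).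
    + eapply is_RInt_ext.
      2: { assert (H := is_RInt_const (V:=C_R_NormedModule) 0 (xn lam n) (RtoC 0)).
           change (scal ((xn lam n) - 0) (RtoC 0)) with ((((xn lam n) - 0) * 0, ((xn lam n) - 0) * 0) : C) in H.
           rewrite Rmult_0_r in H. exact H. }
      intros x Hx. rewrite Rmin_left, Rmax_right in Hx by lra.
      unfold rr. rewrite E. destruct (Rle_dec (xn lam n) x); [lra|].
      unfold zero; simpl. unfold prod_zero, zero; simpl. unfold QQ.
      rewrite Cmult_0_l. reflexivity.
    + eapply is_RInt_ext. 2: apply (is_RInt_Cexp (Dn n) BB (xn lam n) b).
      intros x Hx. rewrite Rmin_left, Rmax_right in Hx by lra.
      unfold rr. rewrite E. destruct (Rle_dec (xn lam n) x); [|lra].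
      unfold QQ, Dn. match goal with |- ?a = ?b => change (@eq C a b) end. field. apply BB_neq0.
  - eapply is_RInt_ext.
    2: { assert (H := is_RInt_const (V:=C_R_NormedModule) 0 b (RtoC 0)).
           change (scal (b - 0) (RtoC 0)) with (((b - 0) * 0, (b - 0) * 0) : C) in H.
           rewrite Rmult_0_r in H. exact H. }
    intros x Hx. unfold rr. rewrite E. rewrite Cmult_0_l. reflexivity.
Qed.

Lemma sum_int b : 0 <= b -> forall k, (k <= Nb b)%nat ->
  is_RInt (V := C_R_NormedModule)
    (fun x => csum (fun n => (RtoC (rr n x) * QQ x)%C) k) 0 b (csum (fun n => In n b) k).
Proof.
  intros Hb k. induction k; intro Hk.
  - simpl. apply term_int; auto.
  - simpl. apply (is_RInt_plus (V:=C_R_NormedModule)). apply IHk; lia. apply term_int; auto.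
Qed.

Definition Jb (b : R) : C :=
  Cminus (/ Copp s * Cexp (Copp s * RtoC b)) (/ Copp s * Cexp (Copp s * RtoC 0))%C.

Definition Ifun (b : R) : C := Cminus (csum (fun n => In n b) (Nb b)) (Jb b).

Lemma full_int b : 0 <= b ->
  is_RInt (V := C_R_NormedModule) (laplace_integrand lam c s) 0 b (Ifun b).
Proof.
  intro Hb. eapply is_RInt_ext.
  { intros x Hx. rewrite Rmin_left, Rmax_right in Hx by lra. symmetry.
    apply (integrand_decomp x b). lra. }
  apply (is_RInt_minus (V:=C_R_NormedModule)).
  - apply sum_int; auto.
  - eapply is_RInt_ext. 2: apply (is_RInt_Cexp (/ Copp s) (Copp s) 0 b).
    intros x _. cbv beta. match goal with |- ?a = ?b => change (@eq C a b) end. field. intro H. apply s_neq0.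
    replace s with (- (- s))%C by ring. rewrite H. ring.
Qed.


Lemma norm_CR (x : C) : norm (K:=R_AbsRing) (V:=C_R_NormedModule) x = Cmod x.
Proof.
  destruct x as [a b]. unfold norm; simpl. unfold prod_norm, Cmod; simpl.
  unfold norm; simpl. unfold abs; simpl. f_equal. rewrite !Rmult_1_r.
  rewrite <- !Rabs_mult. rewrite !Rabs_pos_eq; [reflexivity | nra | nra].
Qed.

Lemma exp_le_mono a b : a <= b -> exp a <= exp b.
Proof. intro H. destruct H as [H|H]. left; apply exp_increasing; auto. subst; lra. Qed.

Lemma key_w n : (1 <= n)%nat ->
  w lam c (INR n) * exp (- c) =
  c * (1 - lam) * (ln (INR n) / Rpower (INR n) lam) * exp (c * (1 - lam) * xn lam n).
Proof.
  intro Hn. assert (HP : 0 < Rpower (INR n) lam) by (unfold Rpower; apply exp_pos).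
  assert (E : exp (c * Rpower (INR n) (1 - lam)) * exp (- c) = exp (c * (1 - lam) * xn lam n)).
  { rewrite <- exp_plus. f_equal. unfold xn. field. lra. }
  unfold w. rewrite <- E. field. lra.
Qed.

Lemma w_nonneg n : (1 <= n)%nat -> 0 <= w lam c (INR n) * exp (- c).
Proof.
  intro Hn. rewrite key_w by auto.
  assert (H1 : 1 <= INR n) by (apply (le_INR 1); lia).
  apply Rmult_le_pos; [|left; apply exp_pos].
  apply Rmult_le_pos; [nra|]. apply Rmult_le_pos.
  rewrite <- ln_1. apply ln_le; lra.
  left. apply Rinv_0_lt_compat. unfold Rpower; apply exp_pos.
Qed.

Lemma zz_neq0 : zz <> 0%C.
Proof. intro H. apply BB_neq0. unfold BB. rewrite H. ring. Qed.

Lemma psi_key n : isprime n = true ->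
  (RtoC (w lam c (INR n) * exp (- c)) * Cexp (BB * RtoC (xn lam n)))%C =
  (RtoC (c * (1 - lam)) * Psi_term lam s n)%C.
Proof.
  intro E. assert (E2 := isprime_ge2 _ E).
  unfold Psi_term. rewrite E. rewrite BB_split, Cinv_Cexp. fold (xn lam n).
  rewrite key_w by lia.
  set (L := ln (INR n) / Rpower (INR n) lam).
  set (E1 := exp (c * (1 - lam) * xn lam n)).
  set (E3 := exp (- (c * (1 - lam) * xn lam n))).
  assert (HE : E1 * E3 = 1) by (unfold E1, E3; rewrite <- exp_plus, Rplus_opp_r; apply exp_0).
  replace (Copp (s * RtoC (xn lam n))) with (Copp s * RtoC (xn lam n))%C by ring.
  set (X := Cexp (Copp s * RtoC (xn lam n))).
  transitivity (RtoC (c * (1 - lam) * L * (E1 * E3)) * X)%C.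
  { rewrite !RtoC_mult. ring. }
  rewrite HE, Rmult_1_r, !RtoC_mult. ring.
Qed.

Definition Ap (n : nat) : C := if isprime n then RtoC (w lam c (INR n) * exp (- c)) else RtoC 0.

Lemma In_alt n b : In n b =
  (RtoC (c * (1 - lam)) / zz * Psi_term lam s n - Cexp (BB * RtoC b) / zz * Ap n)%C.
Proof.
  unfold In, Ap. destruct (isprime n) eqn:E.
  - replace (RtoC (c * (1 - lam)) / zz * Psi_term lam s n)%C
      with ((RtoC (c * (1 - lam)) * Psi_term lam s n) / zz)%C
      by (field; apply zz_neq0).
    rewrite <- (psi_key n E). unfold Dn, BB. rewrite RtoC_mult.
    field. apply zz_neq0.
  - unfold Psi_term. rewrite E. field. apply zz_neq0.
Qed.

Lemma csum_ext f1 f2 N : (forall n, f1 n = f2 n) -> csum f1 N = csum f2 N.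
Proof. intro H. induction N; simpl; rewrite ?IHN; rewrite ?H; reflexivity. Qed.

Lemma csum_lin (a b : C) f g N :
  csum (fun n => (a * f n - b * g n)%C) N = (a * csum f N - b * csum g N)%C.
Proof. induction N; simpl. reflexivity. rewrite IHN. ring. Qed.

Lemma Cmod_csum f N : Cmod (csum f N) <= sum_f_R0 (fun n => Cmod (f n)) N.
Proof.
  induction N; simpl. lra.
  eapply Rle_trans. apply Cmod_triangle. lra.
Qed.

Lemma Ifun_diff b Psi :
  Cminus (Ifun b) (Cminus (Cmult (Cdiv (RtoC (c * (1 - lam))) (Cplus (RtoC (c * (1 - lam))) s)) Psi) (Cinv s)) =
  (RtoC (c * (1 - lam)) / zz * (csum (Psi_term lam s) (Nb b) - Psi)
   - Cexp (BB * RtoC b) / zz * csum Ap (Nb b) + Cexp (Copp s * RtoC b) / s)%C.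
Proof.
  unfold Ifun. rewrite (csum_ext _ _ _ (fun n => In_alt n b)), csum_lin.
  unfold Jb. replace (Copp s * RtoC 0)%C with (RtoC 0) by ring.
  rewrite Cexp_RtoC, exp_0. fold zz. field. split. apply s_neq0. apply zz_neq0.
Qed.

Lemma Cmod_Psi_term n : Cmod (Psi_term lam s n) <= qseq lam (Re s / 2) n.
Proof.
  unfold Psi_term, qseq. destruct (isprime n) eqn:E.
  - assert (E2 := isprime_ge2 _ E). assert (H1 : 1 <= INR n) by (apply (le_INR 1); lia).
    fold (xn lam n). rewrite Cmod_mult, Cmod_R, Cinv_Cexp, Cmod_Cexp.
    assert (HL : 0 <= ln (INR n) / Rpower (INR n) lam).
    { apply Rmult_le_pos. rewrite <- ln_1. apply ln_le; lra.
      left; apply Rinv_0_lt_compat; unfold Rpower; apply exp_pos. }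
    rewrite Rabs_pos_eq by auto. apply Rmult_le_compat_l; auto.
    apply exp_le_mono. assert (Hx : 0 <= xn lam n) by (apply xn_ge0; auto; lia).
    destruct s as [s1 s2]; simpl in *. nra.
  - rewrite Cmod_0. lra.
Qed.

Lemma Psi_ex : ex_series (K:=R_AbsRing) (V:=C_R_CompleteNormedModule) (Psi_term lam s).
Proof.
  apply (ex_series_le (V:=C_R_CompleteNormedModule) _ (qseq lam (Re s / 2))).
  - intro n. change (norm (K:=R_AbsRing) (V:=C_R_NormedModule) (Psi_term lam s n) <= qseq lam (Re s / 2) n).
    rewrite norm_CR. apply Cmod_Psi_term.
  - apply series_core; auto. lra.
Qed.

Lemma tail_bound b : 0 <= b ->
  Cmod (Cexp (BB * RtoC b) / zz * csum Ap (Nb b)) <=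
  exp (- (Re s / 2 * b)) * (c * (1 - lam) / Cmod zz * Series (qseq lam (Re s / 2))).
Proof.
  intro Hb. assert (Hz : 0 < Cmod zz) by (apply Cmod_gt_0, zz_neq0).
  rewrite Cmod_mult. eapply Rle_trans.
  { apply Rmult_le_compat_l. apply Cmod_ge_0. apply Cmod_csum. }
  rewrite scal_sum.
  set (Kc := exp (- (Re s / 2 * b)) * (c * (1 - lam) / Cmod zz)).
  apply Rle_trans with (sum_f_R0 (fun n => qseq lam (Re s / 2) n * Kc) (Nb b)).
  - apply sum_Rle. intros n Hn.
    unfold Ap, qseq. destruct (isprime n) eqn:E.
    + assert (E2 := isprime_ge2 _ E). assert (H1 : 1 <= INR n) by (apply (le_INR 1); lia).
      assert (Hxb : xn lam n <= b).
      { apply (g_le lam hl0 hl1 n b ltac:(lia) Hb). apply floor_le.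
        left; apply g_pos. exact Hn. }
      assert (Hx : 0 <= xn lam n) by (apply xn_ge0; auto; lia).
      rewrite Cmod_R, Rabs_pos_eq by (apply w_nonneg; lia).
      rewrite key_w by lia. unfold Cdiv. rewrite Cmod_mult, Cmod_Cexp, Cmod_inv by apply zz_neq0.
      assert (Hre : Re (BB * RtoC b) = - (c * (1 - lam) + Re s) * b).
      { unfold BB, zz. destruct s as [s1 s2]. simpl. ring. }
      rewrite Hre. unfold Kc.
      set (L := ln (INR n) / Rpower (INR n) lam).
      assert (HL : 0 <= L).
      { apply Rmult_le_pos. rewrite <- ln_1. apply ln_le; lra.
        left; apply Rinv_0_lt_compat; unfold Rpower; apply exp_pos. }
      set (cb := c * (1 - lam)). assert (Hcb : 0 < cb) by (unfold cb; nra).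
      replace (cb * L * exp (cb * xn lam n) * (exp (- (cb + Re s) * b) * / Cmod zz))
        with (cb * L / Cmod zz * exp (- (cb + Re s) * b + cb * xn lam n))
        by (rewrite exp_plus; field; lra).
      replace (L * exp (- (Re s / 2) * xn lam n) * (exp (- (Re s / 2 * b)) * (cb / Cmod zz)))
        with (cb * L / Cmod zz * exp (- (Re s / 2) * xn lam n + - (Re s / 2 * b)))
        by (rewrite exp_plus; field; lra).
      apply Rmult_le_compat_l.
      { apply Rmult_le_pos. nra. left; apply Rinv_0_lt_compat; auto. }
      apply exp_le_mono. nra.
    + rewrite Cmod_R, Rabs_R0. lra.
  - rewrite <- scal_sum. unfold Kc. rewrite Rmult_assoc. apply Rmult_le_compat_l.
    { left; apply exp_pos. }
    apply Rmult_le_compat_l.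
    { apply Rmult_le_pos. nra. left; apply Rinv_0_lt_compat; auto. }
    apply series_partial_le. intro; apply qseq_nonneg; auto.
    apply series_core; auto. lra.
Qed.

End Main.


Lemma exp_small k K d : 0 < k -> 0 <= K -> 0 < d ->
  exists M, forall b, M < b -> K * exp (- (k * b)) < d.
Proof.
  intros Hk HK Hd. exists (- ln (d / (K + 1)) / k). intros b Hb.
  assert (Hq : 0 < d / (K + 1)) by (apply Rdiv_lt_0_compat; lra).
  assert (H1 : - (k * b) < ln (d / (K + 1))).
  { apply (Rmult_lt_compat_l k) in Hb; auto.
    replace (k * (- ln (d / (K + 1)) / k)) with (- ln (d / (K + 1))) in Hb by (field; lra). lra. }
  apply exp_increasing in H1. rewrite exp_ln in H1 by auto.
  assert (H2 : K * exp (- (k * b)) <= K * (d / (K + 1))).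
  { apply Rmult_le_compat_l; lra. }
  assert (H3 : K * (d / (K + 1)) < d).
  { apply (Rmult_lt_reg_r (K + 1)); [lra|]. unfold Rdiv.
    replace (K * (d * / (K + 1)) * (K + 1)) with (K * d) by (field; lra). nra. }
  lra.
Qed.

Theorem mainTheorem10 (lam c : R) (hlam0 : 0 < lam) (hlam1 : lam < 1)
  (hc : 0 < c) (s : C) (hs : 0 < Re s) :
  exists Psi : C,
    is_series (Psi_term lam s) Psi /\
    is_RInt_gen (laplace_integrand lam c s) (at_point 0) (Rbar_locally p_infty)
      (Cminus
         (Cmult (Cdiv (RtoC (c * (1 - lam))) (Cplus (RtoC (c * (1 - lam))) s)) Psi)
         (Cinv s)).
Proof.
  assert (HE : ex_series (K:=R_AbsRing) (V:=C_R_CompleteNormedModule) (Psi_term lam s))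
    by (apply Psi_ex; auto).
  destruct HE as [Psi HPsi]. exists Psi. split. exact HPsi.
  unfold is_RInt_gen. apply filterlimi_lim_ext_loc with (f := fun ab => Ifun lam c s (snd ab)).
  - apply Filter_prod with (Q := fun a => a = 0) (R := fun b => 0 < b).
    + reflexivity.
    + exists 0. intros; auto.
    + intros x y Hx Hy. subst x. simpl. apply full_int; auto. lra.
  - eapply filterlim_comp. apply filterlim_snd.
    apply (filterlim_locally_ball_norm (K:=R_AbsRing) (U:=C_R_NormedModule)).
    intro eps. unfold ball_norm.
    set (al := Cmod (RtoC (c * (1 - lam)) / zz lam c s)%C).
    assert (Hal : 0 <= al) by apply Cmod_ge_0.
    set (e3 := eps / 3). assert (He3 : 0 < e3) by (unfold e3; destruct eps; simpl; lra).
    assert (Hd1 : 0 < e3 / (al + 1)) by (apply Rdiv_lt_0_compat; lra).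
    destruct (proj1 (filterlim_locally_ball_norm (K:=R_AbsRing) (U:=C_R_NormedModule) (F:=Hierarchy.eventually) _ _) HPsi
                (mkposreal _ Hd1)) as [N0 HN0].
    set (m := max N0 1).
    set (Kc0 := c * (1 - lam) / Cmod (zz lam c s) * Series (qseq lam (Re s / 2))).
    assert (HKc0 : 0 <= Kc0).
    { unfold Kc0. apply Rmult_le_pos.
      apply Rmult_le_pos. nra. left; apply Rinv_0_lt_compat, Cmod_gt_0, zz_neq0; auto.
      assert (H0 := series_partial_le (qseq lam (Re s / 2)) 0
                  (fun n => qseq_nonneg lam (Re s / 2) n hlam0) (series_core lam (Re s / 2) hlam0 hlam1 ltac:(lra))).
      simpl in H0. generalize (qseq_nonneg lam (Re s / 2) 0 hlam0). lra. }
    destruct (exp_small (Re s / 2) Kc0 e3 ltac:(lra) HKc0 He3) as [M2 HM2].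
    assert (Hs0 : 0 < Cmod s) by (apply Cmod_gt_0, s_neq0; auto).
    destruct (exp_small (Re s) (/ Cmod s) e3 hs ltac:(left; apply Rinv_0_lt_compat; auto) He3)
      as [M3 HM3].
    exists (Rmax 0 (Rmax (xn lam m) (Rmax M2 M3))). intros b Hb.
    apply Rmax_Rlt in Hb. destruct Hb as [Hb0 Hb]. apply Rmax_Rlt in Hb. destruct Hb as [Hb1 Hb].
    apply Rmax_Rlt in Hb. destruct Hb as [Hb2 Hb3].
    assert (HNb : (N0 <= Nb lam b)%nat).
    { assert (m <= Nb lam b)%nat.
      { unfold Nb. apply floor_le. left; apply g_pos.
        apply (g_le lam hlam0 hlam1 m b ltac:(unfold m; lia) ltac:(lra)). lra. }
      unfold m in H. lia. }
    change (norm (K:=R_AbsRing) (V:=C_R_NormedModule)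
              (Cminus (Ifun lam c s b)
                 (Cminus (Cmult (Cdiv (RtoC (c * (1 - lam))) (Cplus (RtoC (c * (1 - lam))) s)) Psi) (Cinv s)))
            < eps).
    rewrite norm_CR, Ifun_diff by auto.
    assert (T1 : Cmod (RtoC (c * (1 - lam)) / zz lam c s * (csum (Psi_term lam s) (Nb lam b) - Psi)) < e3).
    { rewrite Cmod_mult. fold al.
      assert (H := HN0 (Nb lam b) HNb). unfold ball_norm in H. simpl in H.
      rewrite <- csum_sum_n_R in H.
      change (norm (K:=R_AbsRing) (V:=C_R_NormedModule) (Cminus (csum (Psi_term lam s) (Nb lam b)) Psi) < e3 / (al + 1)) in H.
      rewrite norm_CR in H.
      apply Rle_lt_trans with (al * (e3 / (al + 1))).
      apply Rmult_le_compat_l; auto. left; exact H.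
      apply (Rmult_lt_reg_r (al + 1)); [lra|]. unfold Rdiv.
      replace (al * (e3 * / (al + 1)) * (al + 1)) with (al * e3) by (field; lra). nra. }
    assert (T2 : Cmod (Cexp (BB lam c s * RtoC b) / zz lam c s * csum (Ap lam c) (Nb lam b)) < e3).
    { eapply Rle_lt_trans. apply tail_bound; auto; lra.
      fold Kc0. rewrite Rmult_comm. apply HM2. auto. }
    assert (T3 : Cmod (Cexp (Copp s * RtoC b) / s) < e3).
    { unfold Cdiv. rewrite Cmod_mult, Cmod_Cexp, Cmod_inv by (apply s_neq0; auto).
      replace (Re (Copp s * RtoC b)) with (- (Re s * b)) by (destruct s; simpl; ring).
      rewrite Rmult_comm. apply HM3. auto. }
    set (X1 := (RtoC (c * (1 - lam)) / zz lam c s * (csum (Psi_term lam s) (Nb lam b) - Psi))%C) in *.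
    set (X2 := (Cexp (BB lam c s * RtoC b) / zz lam c s * csum (Ap lam c) (Nb lam b))%C) in *.
    set (X3 := (Cexp (Copp s * RtoC b) / s)%C) in *.
    eapply Rle_lt_trans. apply Cmod_triangle.
    eapply Rle_lt_trans. apply Rplus_le_compat_r. unfold Cminus. apply Cmod_triangle.
    rewrite Cmod_opp. unfold e3 in *. lra.
Qed.
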